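(* Let $\Lambda$ be a finite nonempty set and $m,c\ge1$ natural numbers with $|\Lambda|$ dividing $m$. Then (1) $f^{10}_\Lambda(m,c)\le m\cdot HJ(|\Lambda|^m,c)$; (2) $f^{9,*}_\Lambda(m,c)\le m\cdot HJ(|\Lambda|^m,c)$ (with the convention $m\cdot\omega=\omega$).
   Context: Let $\Lambda$ be a finite nonempty alphabet, $[k]=\{1,\dots,k\}$, and ${}^{[k]}\Lambda$ the set of functions $[k]\to\Lambda$. A $c$-colouring of ${}^{[k]}\Lambda$ is a function $d$ from ${}^{[k]}\Lambda$ into a set with at most $c$ elements. A configuration for $(k,m)$ is a pair $(\langle M_\ell:\ell<m\rangle,\eta^* )$ where (a) the $M_\ell\subseteq[k]$ are pairwise disjoint and $\eta^*$ is a function from $[k]\setminus\bigcup_{\ell<m}M_\ell$ into $\Lambda$. Its set of points is $S=\{\eta\in{}^{[k]}\Lambda:\eta^*\subseteq\eta$ and each $\eta\restriction M_\ell$ is constant$\}$, and for $\eta\in S$, $\alpha\in\Lambda$ let $\mathrm{cnt}_\eta(\alpha)=|\{\ell<m:\eta\restriction M_\ell$ is constantly $\alpha\}|$. Consider the conditions: (b) $|M_\ell|=|M_0|>0$ for all $\ell<m$; (b$'$) $M_\ell\neq\emptyset$ for all $\ell<m$; (c) $d(\nu_1)=d(\nu_2)$ whenever $\nu_1,\nu_2\in S$ and $\mathrm{cnt}_{\nu_1}(\alpha)=\mathrm{cnt}_{\nu_2}(\alpha)=m/|\Lambda|$ for every $\alpha\in\Lambda$; (c$^+$) $d(\nu_1)=d(\nu_2)$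 whenever $\nu_1,\nu_2\in S$ and $\mathrm{cnt}_{\nu_1}(\alpha)=\mathrm{cnt}_{\nu_2}(\alpha)$ for every $\alpha\in\Lambda$; (c$'$) $d\restriction S$ is constant; (d) for all $\alpha,\beta\in\Lambda$, $|\{a:\eta^*(a)=\alpha\}|=|\{a:\eta^*(a)=\beta\}|$. For a list $X$ of these conditions, the associated number is the least $k\le\omega$ divisible by $|\Lambda|$ (with $\omega$ if none exists) such that for every $c$-colouring $d$ of ${}^{[k]}\Lambda$ there is a configuration for $(k,m)$ satisfying (a) and all conditions in $X$. Then $f^{10}_\Lambda(m,c)$ uses (b),(c),(d); $f^{9,*}_\Lambda(m,c)$ uses (b),(c$^+$); $HJ_\Lambda(m,c)$ uses (b$'$),(c$'$). Finally $HJ(n,c)=HJ_{\{1,\dots,n\}}(1,c)$ (the Hales–Jewett number for an $n$-letter alphabet). *)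

(* Defs.v *)
From Stdlib Require Import ClassicalEpsilon.
From mathcomp Require Import all_boot.
Set Implicit Arguments. Unset Strict Implicit. Unset Printing Implicit Defensive.

(* Extended naturals nat ∪ {omega}: Some n = n, None = omega. *)
Definition natw := option nat.

Definition least_w (P : nat -> Prop) : natw :=
  match excluded_middle_informative (exists n, P n) with
  | left _ => Some (epsilon (inhabits 0%N) (fun n => P n /\ forall k, P k -> n <= k))
  | right _ => None
  end.

Definition le_w (a b : natw) : Prop :=
  match b with
  | None => True
  | Some b' => match a with Some a' => a' <= b' | None => False end
  end.

Definition mul_w (m : nat) (a : natw) : natw :=
  match a with Some a' => Some (m * a') | None => None end.

Section Config.
Variables (L : finType) (k m c : nat).

(* points of ^[k]Lambda; [k] is modelled by 'I_k *)
Definition point := {ffun 'I_k -> L}.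
(* a c-colouring: a map into a set with at most c elements, modelled by 'I_c *)
Definition colouring := point -> 'I_c.

(* A configuration: blocks M : 'I_m -> {set 'I_k}; eta* is given by a total
   function e whose values are only used off the union of the blocks. *)
Definition blocks_union (M : 'I_m -> {set 'I_k}) : {set 'I_k} := \bigcup_(l < m) M l.

Definition cond_a (M : 'I_m -> {set 'I_k}) : Prop :=
  forall l l' : 'I_m, l != l' -> [disjoint M l & M l'].

Definition in_S (M : 'I_m -> {set 'I_k}) (e : 'I_k -> L) (eta : point) : Prop :=
  (forall a, a \notin blocks_union M -> eta a = e a) /\
  (forall l : 'I_m, forall a b, a \in M l -> b \in M l -> eta a = eta b).

Definition cnt (M : 'I_m -> {set 'I_k}) (eta : point) (alpha : L) : nat :=
  #|[set l : 'I_m | [forall a in M l, eta a == alpha]]|.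

Definition cond_b (M : 'I_m -> {set 'I_k}) : Prop :=
  forall l : 'I_m, (forall l0 : 'I_m, val l0 = 0 -> #|M l| = #|M l0|) /\ 0 < #|M l|.

Definition cond_b' (M : 'I_m -> {set 'I_k}) : Prop :=
  forall l : 'I_m, M l != set0.

(* (c): cnt = m / |Lambda| written as cnt * |Lambda| = m *)
Definition cond_c (d : colouring) (M : 'I_m -> {set 'I_k}) (e : 'I_k -> L) : Prop :=
  forall nu1 nu2 : point, in_S M e nu1 -> in_S M e nu2 ->
    (forall alpha : L, cnt M nu1 alpha * #|L| = m /\ cnt M nu2 alpha * #|L| = m) ->
    d nu1 = d nu2.

Definition cond_cplus (d : colouring) (M : 'I_m -> {set 'I_k}) (e : 'I_k -> L) : Prop :=
  forall nu1 nu2 : point, in_S M e nu1 -> in_S M e nu2 ->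
    (forall alpha : L, cnt M nu1 alpha = cnt M nu2 alpha) ->
    d nu1 = d nu2.

Definition cond_c' (d : colouring) (M : 'I_m -> {set 'I_k}) (e : 'I_k -> L) : Prop :=
  forall nu1 nu2 : point, in_S M e nu1 -> in_S M e nu2 -> d nu1 = d nu2.

Definition cond_d (M : 'I_m -> {set 'I_k}) (e : 'I_k -> L) : Prop :=
  forall alpha beta : L,
    #|[set a | (a \notin blocks_union M) && (e a == alpha)]| =
    #|[set a | (a \notin blocks_union M) && (e a == beta)]|.

End Config.

Definition good_k (L : finType) (m c k : nat)
  (X : colouring L k c -> ('I_m -> {set 'I_k}) -> ('I_k -> L) -> Prop) : Prop :=
  (#|L| %| k) /\
  forall d : colouring L k c, exists (M : 'I_m -> {set 'I_k}) (e : 'I_k -> L),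
    cond_a M /\ X d M e.

Definition f10 (L : finType) (m c : nat) : natw :=
  least_w (fun k => good_k (L := L) (m := m) (c := c) (k := k) (fun d M e => cond_b M /\ cond_c d M e /\ cond_d M e)).

Definition f9star (L : finType) (m c : nat) : natw :=
  least_w (fun k => good_k (L := L) (m := m) (c := c) (k := k)
                      (fun d M e => cond_b M /\ cond_cplus d M e)).

Definition HJL (L : finType) (m c : nat) : natw :=
  least_w (fun k => good_k (L := L) (m := m) (c := c) (k := k)
                      (fun d M e => cond_b' M /\ cond_c' d M e)).

(* HJ(n,c) = HJ_{1..n}(1,c); the n-letter alphabet is 'I_n *)
Definition HJ (n c : nat) : natw := HJL 'I_n 1 c.

(* Main.v *)
Require Import Defs.
From Stdlib Require Import Classical ClassicalEpsilon.
From mathcomp Require Import all_boot.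
Set Implicit Arguments. Unset Strict Implicit. Unset Printing Implicit Defensive.

Lemma ex_least_aux (P : nat -> Prop) N : forall k, k <= N -> P k ->
  exists n, P n /\ forall j, P j -> n <= j.
Proof.
elim: N => [|N IH] k Hk Pk.
  exists k; split=> // j _; by move: Hk; rewrite leqn0 => /eqP->.
case: (classic (exists j, j < k /\ P j)) => [[j [ltj Pj]]|nex].
  apply: (IH j) => //; rewrite -ltnS; exact: leq_trans ltj Hk.
exists k; split=> // j Pj; rewrite leqNgt; apply/negP => ltj; apply: nex; by exists j.
Qed.

Lemma least_w_le (P : nat -> Prop) k : P k -> le_w (least_w P) (Some k).
Proof.
move=> Pk; rewrite /least_w; case: excluded_middle_informative => [ex|nex]; last first.
  by exfalso; apply: nex; exists k.
have [_ H] := epsilon_spec (inhabits 0) (fun n => P n /\ forall k, P k -> n <= k)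
  (ex_least_aux (leqnn k) Pk).
exact: H.
Qed.

Lemma least_w_some (P : nat -> Prop) h : least_w P = Some h -> P h.
Proof.
rewrite /least_w; case: excluded_middle_informative => [[k Pk]|] // [<-].
by have [] := epsilon_spec (inhabits 0) (fun n => P n /\ forall k, P k -> n <= k)
  (ex_least_aux (leqnn k) Pk).
Qed.

Lemma card_bij (T U : finType) (f : T -> U) (g : U -> T) (Q : pred U) :
  cancel f g -> cancel g f -> #|[set x | Q (f x)]| = #|[set y | Q y]|.
Proof.
move=> fK gK; rewrite -(card_imset _ (can_inj fK)); apply: eq_card => y.
rewrite inE; apply/imsetP/idP => [[x]|Qy].
  by rewrite inE => Qx ->.
by exists (g y); rewrite ?inE gK.
Qed.

Lemma sum_if_card (T : finType) (P : pred T) :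
  \sum_(x : T) (if P x then 1 else 0) = #|[set x | P x]|.
Proof. by rewrite -sum1_card [RHS]big_mkcond; apply: eq_bigr => x _; rewrite inE. Qed.

Lemma cardP a b : #|{: 'I_a * 'I_b}| = a * b.
Proof. by rewrite card_prod !card_ord. Qed.

Definition splitI a b (i : 'I_(a*b)) : 'I_a * 'I_b :=
  enum_val (cast_ord (esym (cardP a b)) i).
Definition joinI a b (p : 'I_a * 'I_b) : 'I_(a*b) :=
  cast_ord (cardP a b) (enum_rank p).

Lemma splitIK a b : cancel (@splitI a b) (@joinI a b).
Proof. by move=> i; rewrite /splitI /joinI enum_valK cast_ordKV. Qed.
Lemma joinIK a b : cancel (@joinI a b) (@splitI a b).
Proof. by move=> p; rewrite /splitI /joinI cast_ordK enum_rankK. Qed.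

Section Main.
Variables (L : finType) (m c h : nat).
Local Notation n := (#|L| ^ m).
Definition Sig := {ffun 'I_m -> L}.
Lemma cardSig : #|{: Sig}| = n.
Proof. by rewrite card_ffun card_ord. Qed.
Definition dec (i : 'I_n) : Sig := enum_val (cast_ord (esym cardSig) i).
Definition code (s : Sig) : 'I_n := cast_ord cardSig (enum_rank s).
Lemma codeK : cancel code dec.
Proof. by move=> s; rewrite /dec /code cast_ordK enum_rankK. Qed.

Local Notation spl := (@splitI m h).
Local Notation jn := (@joinI m h).

Definition Mb (M' : {set 'I_h}) (l : 'I_m) : {set 'I_(m*h)} :=
  [set a | ((spl a).1 == l) && ((spl a).2 \in M')].

Variable r : Sig -> Sig.
Definition eb (e' : 'I_h -> 'I_n) (a : 'I_(m*h)) : L := r (dec (e' (spl a).2)) (spl a).1.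
Definition xof (j0 : 'I_h) (nu : point L (m*h)) : Sig := [ffun l => nu (jn (l, j0))].

Lemma Mb_a M' : cond_a (Mb M').
Proof.
move=> l l' ne; rewrite -setI_eq0; apply/eqP/setP => a; rewrite !inE.
apply/negP => /andP [/andP [/eqP E _] /andP [/eqP E' _]].
by move: ne; rewrite -E -E' eqxx.
Qed.

Lemma Mb_card M' l : #|Mb M' l| = #|M'|.
Proof.
have := card_bij (fun p => (p.1 == l) && (p.2 \in M')) (@splitIK m h) (@joinIK m h).
rewrite /Mb /= => ->.
have -> : #|[set p : 'I_m * 'I_h | (p.1 == l) && (p.2 \in M')]| = #|setX [set l] M'|.
  by apply: eq_card => p; rewrite !inE.
by rewrite cardsX cards1 mul1n.
Qed.

Lemma Mb_b M' : M' != set0 -> cond_b (Mb M').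
Proof.
move=> ne l; split; first by move=> l0 _; rewrite !Mb_card.
by rewrite Mb_card card_gt0.
Qed.

Lemma in_union M' a : (a \in blocks_union (Mb M')) = ((spl a).2 \in M').
Proof.
apply/bigcupP/idP => [[l _]|H]; first by rewrite inE => /andP [].
by exists (spl a).1 => //; rewrite inE eqxx.
Qed.

Lemma cnt_x (M' : {set 'I_h}) (e : 'I_(m*h) -> L) (j0 : 'I_h) (nu : point L (m*h)) (alpha : L) : j0 \in M' -> in_S (Mb M') e nu ->
  cnt (Mb M') nu alpha = #|[set l | xof j0 nu l == alpha]|.
Proof.
move=> Hj [_ H2]; apply: eq_card => l; rewrite !inE ffunE.
have Hin : jn (l, j0) \in Mb M' l by rewrite inE joinIK eqxx Hj.
apply/forall_inP/idP => [H|/eqP E a Ha]; first exact: H.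
by rewrite (H2 l a (jn (l, j0))) // E.
Qed.

Lemma Mb_d (M' : {set 'I_h}) (e' : 'I_h -> 'I_n) :
  (forall s alpha beta, #|[set l | r s l == alpha]| = #|[set l | r s l == beta]|) ->
  cond_d (Mb M') (eb e').
Proof.
move=> Hbal alpha beta.
have E g : #|[set a | (a \notin blocks_union (Mb M')) && (eb e' a == g)]| =
    \sum_j \sum_l (if (j \notin M') && (r (dec (e' j)) l == g) then 1 else 0).
  rewrite -sum_if_card (reindex jn (onW_bij _ (Bijective (@joinIK m h) (@splitIK m h)))).
  rewrite exchange_big pair_big /=; apply: eq_bigr => p _.
  by rewrite in_union /eb joinIK.
rewrite !E; apply: eq_bigr => j _; case: (j \in M') => //=.
by rewrite !sum_if_card.
Qed.

Hypothesis HJh : good_k (L := 'I_n) (m := 1) (c := c) (k := h)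
  (fun d M e => cond_b' M /\ cond_c' d M e).

Lemma key (d : colouring L (m*h) c) : exists (M' : {set 'I_h}) (e' : 'I_h -> 'I_n) j0,
  j0 \in M' /\ forall nu1 nu2, in_S (Mb M') (eb e') nu1 -> in_S (Mb M') (eb e') nu2 ->
  r (xof j0 nu1) = xof j0 nu1 -> r (xof j0 nu2) = xof j0 nu2 -> d nu1 = d nu2.
Proof.
pose enc (w : {ffun 'I_h -> 'I_n}) : point L (m*h) :=
  [ffun a => r (dec (w (spl a).2)) (spl a).1].
pose d' : colouring 'I_n h c := fun w => d (enc w).
have [_ /(_ d') [M1 [e' [_ [Hb Hc]]]]] := HJh.
set M' := M1 ord0.
have /set0Pn [j0 Hj0] : M' != set0 by exact: Hb.
exists M', e', j0; split=> // nu1 nu2.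
have U1 : blocks_union M1 = M' by rewrite /blocks_union big_ord1.
pose w (nu : point L (m*h)) : {ffun 'I_h -> 'I_n} :=
  [ffun j => if j \in M' then code (xof j0 nu) else e' j].
have wS nu : in_S M1 e' (w nu).
  split=> [a|l a b]; rewrite !ffunE; first by rewrite U1 => /negbTE ->.
  by rewrite (ord1 l) => -> ->.
have encw nu : in_S (Mb M') (eb e') nu -> r (xof j0 nu) = xof j0 nu -> enc (w nu) = nu.
  move=> [H1 H2] Hr; apply/ffunP => a; rewrite !ffunE.
  case: ifP => Ha.
    rewrite codeK Hr ffunE; apply: (H2 (spl a).1); rewrite inE ?joinIK eqxx //=.
  by rewrite H1 // in_union Ha.
move=> S1 S2 R1 R2.
by rewrite -(encw _ S1 R1) -(encw _ S2 R2); apply: Hc.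
Qed.

End Main.

Definition balb (L : finType) (m : nat) (s : Sig L m) :=
  [forall a, #|[set l | s l == a]| * #|L| == m].

Lemma bal_exists (L : finType) (m : nat) : 0 < #|L| -> #|L| %| m -> exists s, @balb L m s.
Proof.
move=> Lpos dvd.
have E : m = (m %/ #|L|) * #|L| by rewrite divnK.
pose s : Sig L m := [ffun l => enum_val (@splitI (m %/ #|L|) #|L| (cast_ord E l)).2].
exists s; apply/forallP => a.
have -> : #|[set l | s l == a]| =
   #|[set l | (fun p => p.2 == enum_rank a) (@splitI (m %/ #|L|) #|L| (cast_ord E l))]|.
  apply: eq_card => l; rewrite !inE ffunE.
  by apply/eqP/eqP => [<-|->]; rewrite ?enum_valK ?enum_rankK.
rewrite (card_bij (fun p : 'I_(m %/ #|L|) * 'I_#|L| => p.2 == enum_rank a)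
   (f := fun l => @splitI (m %/ #|L|) #|L| (cast_ord E l))
   (g := fun p => cast_ord (esym E) (joinI p))); last 2 first.
- by move=> l; rewrite splitIK cast_ordK.
- by move=> p; rewrite cast_ordKV joinIK.
have -> : #|[set p : 'I_(m %/ #|L|) * 'I_#|L| | p.2 == enum_rank a]| =
   #|setX [set: 'I_(m %/ #|L|)] [set enum_rank a]|.
  by apply: eq_card => p; rewrite !inE.
by rewrite cardsX cards1 cardsT card_ord muln1 -E.
Qed.

Theorem mainTheorem2 (L : finType) (m c : nat) :
  0 < #|L| -> 0 < m -> 0 < c -> #|L| %| m ->
  le_w (f10 L m c) (mul_w m (HJ (#|L| ^ m) c)) /\
  le_w (f9star L m c) (mul_w m (HJ (#|L| ^ m) c)).
Proof.
move=> Lpos mpos cpos dvd.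
case EH: (HJ (#|L| ^ m) c) => [h|]; last by split.
have HJh := least_w_some EH.
have dvdk : #|L| %| m * h by apply: dvdn_mulr.
have [s0 Hs0] := bal_exists Lpos dvd.
split.
- apply: least_w_le; split=> // d.
  pose r (s : Sig L m) := if balb s then s else s0.
  have [M' [e' [j0 [Hj Hd]]]] := key r HJh d.
  exists (Mb M'), (eb r e'); split; first exact: Mb_a.
  split; first by apply: Mb_b; apply/set0Pn; exists j0.
  split.
    move=> nu1 nu2 S1 S2 H; apply: Hd => //.
      rewrite /r; have -> // : balb (xof j0 nu1).
      apply/forallP => a; rewrite -(cnt_x a Hj S1); apply/eqP; exact: (H a).1.
    rewrite /r; have -> // : balb (xof j0 nu2).
    apply/forallP => a; rewrite -(cnt_x a Hj S2); apply/eqP; exact: (H a).2.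
  apply: Mb_d => s a b.
  have Hb : balb (r s) by rewrite /r; case: ifP.
  move/forallP: Hb => Hb.
  apply/eqP; rewrite -(eqn_pmul2r Lpos) (eqP (Hb a)) (eqP (Hb b)).
  by [].
- apply: least_w_le; split=> // d.
  have [M' [e' [j0 [Hj Hd]]]] := key id HJh d.
  exists (Mb M'), (eb id e'); split; first exact: Mb_a.
  split; first by apply: Mb_b; apply/set0Pn; exists j0.
  by move=> nu1 nu2 S1 S2 _; apply: Hd.
Qed.
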